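(* Let $(G,\sigma)$ be a connection graph and let $f:V\to\mathbb{R}^{d\times d}$ satisfy $(\mathcal{L}f)(x)=0_{d\times d}$ for all $x\in V$. Then for any $i,j\in V$, $f(i)=\Omega^0_{ij}f(j)$.
   Context: A connection graph $(G,\sigma)$: finite connected weighted graph $G=(V,E,W)$ with $w_{ij}>0$ iff $\{i,j\}\in E$, $\deg(i)=\sum_j w_{ij}$, and $\sigma$ mapping oriented edges to $\mathsf{O}(d)$ with $\sigma_{ji}=\sigma_{ij}^{\mathrm T}$. $(\mathcal{L}f)(i)=\sum_{j\sim i}w_{ij}(f(i)-\sigma_{ij}f(j))$. Let $(X_t)_{t\ge0}$ be the simple random walk on $G$ with transition probabilities $w_{ij}/\deg(i)$, and $\mathbb{E}^i$ the expectation given $X_0=i$. For $s\in\{0,1\}$ and $j\in V$, $T^s_j=\inf\{t\ge s: X_t=j\}$. The mean path signature is $\Omega^s_{ij}=\mathbb{E}^i\big[\prod_{\ell=1}^{T^s_j}\sigma_{X_{\ell-1}X_\ell}\big]$ (ordered product, empty product $=I_d$; so $\Omega^0_{ii}=I_d$). *)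

(* Defs.v *)
From HB Require Import structures.
From mathcomp Require Import all_boot all_order all_algebra.
From mathcomp Require Import all_classical all_reals all_analysis.
Set Implicit Arguments. Unset Strict Implicit. Unset Printing Implicit Defensive.
Import Order.TTheory GRing.Theory Num.Theory.
Local Open Scope ring_scope.

Section ConnGraph.
Variables (R : realType) (V : finType) (d : nat).
Variables (w : V -> V -> R) (sigma : V -> V -> 'M[R]_d).

Definition adj : rel V := fun i j => 0 < w i j.

Definition connection_graph : Prop :=
  [/\ forall i j, w i j = w j i,
      forall i j, 0 <= w i j,
      forall i, w i i = 0,
      forall i j, connect adj i j &
      forall i j, adj i j ->
        sigma i j *m (sigma i j)^T = 1%:M /\ sigma j i = (sigma i j)^T].

Definition deg (i : V) : R := \sum_(j : V) w i j.

Definition conn_laplacian (f : V -> 'M[R]_d) (i : V) : 'M[R]_d :=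
  \sum_(j : V) w i j *: (f i - sigma i j *m f j).

Definition trans (i j : V) : R := w i j / deg i.

(* a path of length n is p : 'I_(n+1) -> V, p k = X_k *)
Definition path_prob n (p : {ffun 'I_n.+1 -> V}) : R :=
  \prod_(k < n) trans (p (inord k)) (p (inord k.+1)).

Definition path_sig n (p : {ffun 'I_n.+1 -> V}) : 'M[R]_d :=
  \big[mulmx/1%:M]_(k < n) sigma (p (inord k)) (p (inord k.+1)).

(* paths from i whose first visit (at time >= 0) to j is at time n,
   i.e. the event {X_0..X_n = p, T^0_j = n} *)
Definition first_hit0 i j n (p : {ffun 'I_n.+1 -> V}) : bool :=
  [&& p ord0 == i, p ord_max == j & [forall k : 'I_n.+1, (k < n)%N ==> (p k != j)]].

Definition Omega0_term i j n : 'M[R]_d :=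
  \sum_(p : {ffun 'I_n.+1 -> V} | first_hit0 i j p) path_prob p *: path_sig p.

(* mean path signature Omega^0_ij = E^i[prod_{l=1}^{T^0_j} sigma_{X_{l-1} X_l}]
   = sum_{n >= 0} E^i[ ... ; T^0_j = n ], taken entrywise *)
Definition Omega0 i j : 'M[R]_d :=
  \matrix_(a < d, b < d) limn (fun N => \sum_(n < N) Omega0_term i j n a b).

End ConnGraph.

(* Main.v *)
Require Import Defs.
From HB Require Import structures.
From mathcomp Require Import all_boot all_order all_algebra.
From mathcomp Require Import all_classical all_reals all_analysis.
From mathcomp Require Import ring lra.
Import Order.TTheory GRing.Theory Num.Theory.
Import numFieldNormedType.Exports.
Local Open Scope ring_scope.
Local Open Scope classical_set_scope.
Section An.
Variable R : realType.

Lemma sq_small (x e : R) : 0 < e -> x ^+ 2 < e ^+ 2 -> `|x| < e.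
Proof.
move=> e0 h; rewrite ltr_norml; apply/andP; split; nra.
Qed.

Lemma cvg0_sq (u v : R^nat) : (forall N, u N ^+ 2 <= v N) -> v @ \oo --> 0 ->
  u @ \oo --> 0.
Proof.
move=> uv /cvgr0Pnorm_lt vc; apply/cvgr0Pnorm_lt => e e0.
have := vc (e ^+ 2) (exprn_gt0 2 e0).
apply: filterS => n /= h; apply: sq_small => //.
exact: le_lt_trans (uv n) (le_lt_trans (ler_norm _) h).
Qed.

Lemma cauchy_bound (u v : R^nat) :
  (forall N M, (N <= M)%N -> (u M - u N) ^+ 2 <= v N) -> v @ \oo --> 0 ->
  cvgn u.
Proof.
move=> uv /cvgr0Pnorm_lt vc; apply/cauchy_cvgP/cauchy_ballP => e e0.
have e20 : 0 < e / 2 by rewrite divr_gt0.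
have [N0 _ HN] := vc ((e / 2) ^+ 2) (exprn_gt0 2 e20).
have hN0 := HN N0 (leqnn N0).
have H : forall x, (N0 <= x)%N -> `|u x - u N0| < e / 2.
  move=> x hx; apply: sq_small => //.
  exact: le_lt_trans (uv _ _ hx) (le_lt_trans (ler_norm _) hN0).
rewrite near_map2.
near=> x y.
rewrite -ball_normE /=.
have hx : (N0 <= x)%N by near: x; exists N0.
have hy : (N0 <= y)%N by near: y; exists N0.
have := H _ hx; have := H _ hy.
rewrite (_ : u x - u y = (u x - u N0) - (u y - u N0)); last by ring.
move=> h1 h2.
apply: (le_lt_trans (ler_normB _ _)).
by rewrite (splitr e) ltrD.
Unshelve. all: by end_near. Qed.
End An.

Section Main.
Variables (R : realType) (V : finType) (d : nat).
Variables (w : V -> V -> R) (sigma : V -> V -> 'M[R]_d) (j : V).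
Hypothesis wsym : forall x y, w x y = w y x.
Hypothesis wge0 : forall x y, 0 <= w x y.
Hypothesis conn : forall x y, connect (adj w) x y.
Hypothesis orth : forall x y, adj w x y -> sigma x y *m (sigma x y)^T = 1%:M.

Local Notation P := (trans w).

Lemma deg_ge0 x : 0 <= deg w x.
Proof. by apply: sumr_ge0 => y _. Qed.

Lemma P_ge0 x y : 0 <= P x y.
Proof. by rewrite /trans divr_ge0 ?deg_ge0. Qed.

Lemma le_sum1 {T : finType} (g : T -> R) x : (forall y, 0 <= g y) -> g x <= \sum_y g y.
Proof.
move=> g0; rewrite (bigD1 x) //= lerDl; by apply: sumr_ge0 => y _.
Qed.

Lemma deg_gt0 x : x != j -> 0 < deg w x.
Proof.
move=> xj; have /connectP [p pth lst] := conn x j.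
case: p pth lst => [|y p] /=; first by move=> _ E; rewrite E eqxx in xj.
case/andP => axy _ _.
have axy' : 0 < w x y := axy.
rewrite /deg; exact: lt_le_trans axy' (le_sum1 (w x) y (wge0 x)).
Qed.

Lemma sumP x : x != j -> \sum_y P x y = 1.
Proof.
move=> xj; rewrite /trans -mulr_suml divff //.
by rewrite gt_eqF // deg_gt0.
Qed.

Lemma P_nadj x y : ~~ adj w x y -> P x y = 0.
Proof.
move=> h; have : w x y = 0.
  by apply/eqP; rewrite eq_le wge0 andbT leNgt.
by rewrite /trans => ->; rewrite mul0r.
Qed.

Definition F (M : 'M[R]_d) : R := \sum_a \sum_b (M a b) ^+ 2.

Lemma F_ge0 M : 0 <= F M.
Proof. by apply: sumr_ge0 => a _; apply: sumr_ge0 => b _; apply: sqr_ge0. Qed.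

Lemma F_entry (M : 'M[R]_d) (a b : 'I_d) : M a b ^+ 2 <= F M.
Proof.
have h1 := le_sum1 (fun b => M a b ^+ 2) b (fun _ => sqr_ge0 _).
have h2 := le_sum1 (fun a => \sum_b M a b ^+ 2) a
  (fun y => sumr_ge0 _ (fun b _ => sqr_ge0 (M y b))).
exact: le_trans h1 h2.
Qed.

Lemma F_tr M : F M = \tr (M^T *m M).
Proof.
rewrite /F /mxtrace exchange_big; apply: eq_bigr => b _.
rewrite !mxE; apply: eq_bigr => a _; by rewrite mxE expr2.
Qed.

Lemma F0 : F 0 = 0.
Proof. by rewrite /F big1 // => a _; rewrite big1 // => b _; rewrite mxE expr0n. Qed.

Lemma F1 : F 1%:M = d%:R.
Proof. by rewrite F_tr trmx1 mulmx1 mxtrace1. Qed.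

Lemma F_orth s M : s *m s^T = 1%:M -> F (s *m M) = F M.
Proof.
move=> /mulmx1C h; rewrite !F_tr trmx_mul -mulmxA (mulmxA s^T) h mul1mx //.
Qed.

Lemma jensen (p m : V -> R) : (forall y, 0 <= p y) -> \sum_y p y = 1 ->
  (\sum_y p y * m y) ^+ 2 <= \sum_y p y * m y ^+ 2.
Proof.
move=> p0 p1; set mu := \sum_y p y * m y.
have : 0 <= \sum_y p y * (m y - mu) ^+ 2.
  by apply: sumr_ge0 => y _; rewrite mulr_ge0 ?sqr_ge0.
rewrite (eq_bigr (fun y => p y * m y ^+ 2 - (2 * mu) * (p y * m y) + mu ^+ 2 * p y)); last first.
  by move=> y _; ring.
rewrite big_split /= sumrB -!mulr_sumr p1 -/mu; lra.
Qed.

Lemma F_conv (p : V -> R) (M : V -> 'M[R]_d) : (forall y, 0 <= p y) -> \sum_y p y = 1 ->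
  F (\sum_y p y *: M y) <= \sum_y p y * F (M y).
Proof.
move=> p0 p1.
rewrite /F (eq_bigr (fun y => \sum_a \sum_b p y * M y a b ^+ 2)); last first.
  by move=> y _; rewrite mulr_sumr; apply: eq_bigr => a _; rewrite mulr_sumr.
rewrite [leRHS]exchange_big; apply: ler_sum => a _.
rewrite [leRHS]exchange_big; apply: ler_sum => b _.
rewrite summxE (eq_bigr (fun y => p y * M y a b)); last by move=> y _; rewrite mxE.
exact: jensen.
Qed.

Definition Tm (h : V -> 'M[R]_d) x : 'M[R]_d :=
  if x == j then 0 else \sum_y P x y *: (sigma x y *m h y).
Definition Ts (r : V -> R) x : R :=
  if x == j then 0 else \sum_y P x y * r y.

Lemma J c (h : V -> 'M[R]_d) r x : (forall y, F (h y) <= c * r y) ->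
  F (Tm h x) <= c * Ts r x.
Proof.
move=> hb; rewrite /Tm /Ts; case: eqP => [_|/eqP xj]; first by rewrite F0 mulr0.
have := @F_conv (P x) (fun y => sigma x y *m h y) (P_ge0 x) (@sumP x xj).
move=> /le_trans; apply.
rewrite mulr_sumr; apply: ler_sum => y _.
have [a|na] := boolP (adj w x y).
  rewrite F_orth ?orth // mulrCA; apply: ler_wpM2l; [exact: P_ge0|exact: hb].
by rewrite P_nadj // !mul0r mulr0.
Qed.


Lemma TmB (h h' : V -> 'M[R]_d) x : Tm h x - Tm h' x = Tm (fun y => h y - h' y) x.
Proof.
rewrite /Tm; case: eqP => _; first by rewrite subrr.
rewrite -sumrB; apply: eq_bigr => y _; by rewrite mulmxBr scalerBr.
Qed.

Lemma Ts_mono (r r' : V -> R) x : (forall y, r y <= r' y) -> Ts r x <= Ts r' x.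
Proof.
move=> h; rewrite /Ts; case: eqP => _ //.
by apply: ler_sum => y _; apply: ler_wpM2l; [exact: P_ge0|exact: h].
Qed.

Lemma Ts_ge0 (r : V -> R) x : (forall y, 0 <= r y) -> 0 <= Ts r x.
Proof.
move=> h; rewrite /Ts; case: eqP => _ //.
by apply: sumr_ge0 => y _; apply: mulr_ge0; [exact: P_ge0|exact: h].
Qed.

Definition A0 x : 'M[R]_d := if x == j then 1%:M else 0.
Definition Sp N := iter N (fun S x => A0 x + Tm S x) A0.
Definition q0 x : R := if x == j then 0 else 1.
Definition q N := iter N Ts q0.

Lemma Sp_bound k x : F (Sp k x) <= d%:R.
Proof.
elim: k x => [|k IH] x /=.
  by rewrite /A0; case: eqP => _; [rewrite F1 | rewrite F0 ler0n].
rewrite /A0; case: (eqVneq x j) => [->|xj].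
  by rewrite /Tm eqxx addr0 F1.
have hb : forall y, F (Sp k y) <= d%:R * 1 by move=> y; rewrite mulr1 IH.
rewrite add0r; have := @J d%:R (Sp k) (fun _ => 1) x hb.
move=> /le_trans; apply.
by rewrite /Ts (negbTE xj) (eq_bigr (P x)) ?sumP ?mulr1 // => y _; rewrite mulr1.
Qed.

Lemma Sp_j k : Sp k j = 1%:M.
Proof. by case: k => [|k] /=; rewrite /A0 ?/Tm eqxx ?addr0. Qed.

Lemma q_j N : q N j = 0.
Proof. by case: N => [|N] /=; rewrite ?/Ts /q0 eqxx. Qed.

Lemma Sp_diff N k x : F (Sp (N + k) x - Sp N x) <= d%:R * q N x.
Proof.
elim: N x => [|N IH] x.
  rewrite add0n /= /q0 /A0; case: (eqVneq x j) => [->|xj].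
    by rewrite Sp_j subrr F0 mulr0.
  by rewrite subr0 mulr1 Sp_bound.
rewrite addSn /= opprD addrACA subrr add0r TmB.
exact: J.
Qed.

Lemma Sp_entry N M x a b : (N <= M)%N ->
  (Sp M x a b - Sp N x a b) ^+ 2 <= d%:R * q N x.
Proof.
move=> NM; have := F_entry (Sp M x - Sp N x) a b; rewrite !mxE => h.
apply: le_trans h _; rewrite -(subnKC NM); exact: Sp_diff.
Qed.

Lemma q_ge0 N x : 0 <= q N x.
Proof.
elim: N x => [|N IH] x /=; first by rewrite /q0; case: eqP.
exact: Ts_ge0.
Qed.

Lemma q_dec N x : q N.+1 x <= q N x.
Proof.
elim: N x => [|N IH] x; last exact: Ts_mono.
rewrite /= /Ts /q0; case: (eqVneq x j) => [_|xj] /=; first exact: lexx.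
rewrite -[leRHS](sumP x xj); apply: ler_sum => y _; rewrite -[leRHS]mulr1.
apply: ler_wpM2l; first exact: P_ge0.
by case: eqP => _; rewrite ?ler01 ?lexx.
Qed.


Definition Lq x := limn (fun N => q N x).

Lemma cq x : (fun N => q N x) @ \oo --> Lq x.
Proof.
apply: nonincreasing_is_cvgn.
  by apply/nonincreasing_seqP => n; exact: q_dec.
by exists 0 => _ [n _ <-]; exact: q_ge0.
Qed.

Lemma Lq_ge0 x : 0 <= Lq x.
Proof.
apply: limr_ge; first exact: cq.
by apply: nearW => n; exact: q_ge0.
Qed.

Lemma Lq_j : Lq j = 0.
Proof.
rewrite /Lq (_ : (fun N => q N j) = fun _ => 0); last by apply/funext => N; exact: q_j.
exact: lim_cst.
Qed.

Lemma Lq_fix x : Lq x = Ts Lq x.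
Proof.
have h1 : (fun N => q N.+1 x) @ \oo --> Lq x.
  by have := cq x; rewrite -cvg_shiftS.
have h2 : (fun N => q N.+1 x) @ \oo --> Ts Lq x.
  rewrite /= /Ts; case: eqP => _; first exact: cvg_cst.
  apply: cvg_big => //; first exact: add_continuous.
  move=> y _; apply: cvgMl_tmp; exact: cq.
exact: (cvg_unique _ h1 h2).
Qed.


Lemma P_gt0 x y : x != j -> adj w x y -> 0 < P x y.
Proof.
move=> xj axy; have axy' : 0 < w x y := axy.
by rewrite /trans divr_gt0 // deg_gt0.
Qed.

Lemma Lq0 x : Lq x = 0.
Proof.
have [m _ Hmax0] := @arg_maxP _ _ V j xpredT Lq isT.
have Hmax : forall z, Lq z <= Lq m by move=> z; exact: Hmax0.
have clos : forall x y, adj w x y -> Lq x = Lq m -> Lq y = Lq m.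
  move=> x1 y axy Hx; case: (eqVneq x1 j) => [xj|xj].
    have m0 : Lq m = 0 by rewrite -Hx xj Lq_j.
    by apply/eqP; rewrite eq_le Hmax // m0 Lq_ge0.
  have hs : \sum_z P x1 z * (Lq m - Lq z) = 0.
    under eq_bigr do rewrite mulrBr.
    rewrite sumrB -mulr_suml sumP // mul1r.
    by have := Lq_fix x1; rewrite /Ts (negbTE xj) => <-; rewrite Hx subrr.
  have hge : forall i, true -> 0 <= P x1 i * (Lq m - Lq i).
    by move=> i _; rewrite mulr_ge0 ?P_ge0 // subr_ge0 Hmax.
  have h0 : P x1 y * (Lq m - Lq y) = 0 by apply: (psumr_eq0P hge hs).
  move: h0 => /eqP; rewrite mulf_eq0 (gt_eqF (P_gt0 x1 y xj axy)) /= subr_eq0.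
  by move=> /eqP.
have gen : forall p z, path (adj w) z p -> Lq z = Lq m -> Lq (last z p) = Lq m.
  elim=> [|y p IH] z //= /andP [azy pth] hz; apply: IH pth _; exact: clos azy hz.
have /connectP [p pth lst] := conn m j.
have := gen p m pth erefl; rewrite -lst Lq_j => m0.
apply/eqP; rewrite eq_le Lq_ge0 andbT m0; exact: Hmax.
Qed.

Lemma q_cvg0 x : (fun N => q N x) @ \oo --> 0.
Proof. by rewrite -(Lq0 x); exact: cq. Qed.


Variable f : V -> 'M[R]_d.
Hypothesis lapf : forall x, conn_laplacian w sigma f x = 0.

Lemma harm x : x != j -> f x = \sum_y P x y *: (sigma x y *m f y).
Proof.
move=> xj; have := lapf x; rewrite /conn_laplacian.
under eq_bigr do rewrite scalerBr.
rewrite sumrB => /eqP; rewrite subr_eq0 => /eqP H.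
rewrite -scaler_suml in H.
have dg := deg_gt0 x xj.
transitivity ((deg w x)^-1 *: (deg w x *: f x)).
  by rewrite scalerA mulVf ?gt_eqF // scale1r.
rewrite {2}/deg H scaler_sumr; apply: eq_bigr => y _.
by rewrite scalerA /trans mulrC.
Qed.

Definition B0 x := if x == j then 0 else f x.
Definition B N := iter N Tm B0.

Lemma key N x : f x = Sp N x *m f j + B N x.
Proof.
elim: N x => [|N IH] x /=.
  by rewrite /A0 /B0; case: eqP => [->|_]; [rewrite mul1mx addr0 | rewrite mul0mx add0r].
rewrite /A0 /Tm; case: (eqVneq x j) => [->|xj]; first by rewrite /= !addr0 mul1mx.
rewrite /= add0r mulmx_suml -big_split /= harm //.
apply: eq_bigr => y _.
by rewrite -scalemxAl -mulmxA -scalerDr -mulmxDr -IH.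
Qed.

Definition Cf := \sum_y F (f y).

Lemma B_bound N x : F (B N x) <= Cf * q N x.
Proof.
elim: N x => [|N IH] x /=; last exact: J.
rewrite /B0 /q0; case: eqP => _; first by rewrite F0 mulr0.
by rewrite mulr1; apply: (le_sum1 (fun y => F (f y))) => y; exact: F_ge0.
Qed.


Lemma Om0 x : Omega0_term w sigma x j 0 = A0 x.
Proof.
rewrite /Omega0_term /A0; case: (eqVneq x j) => [->|xj].
  rewrite (bigD1 [ffun => j]) /=; last first.
    rewrite /first_hit0 !ffunE eqxx /=; by apply/forallP.
  rewrite big1 ?addr0; last first.
    move=> p /andP [/and3P [h0 _ _] ne]; exfalso; move/eqP: ne; apply.
    by apply/ffunP => k; rewrite ffunE (ord1 k) (eqP h0).
  by rewrite /path_prob /path_sig !big_ord0 scale1r.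
apply: big1 => p /and3P [/eqP h0 /eqP h1 _]; exfalso.
have e : (ord_max : 'I_1) = ord0 by apply/val_inj.
by move: xj; rewrite -h0 -h1 e eqxx.
Qed.

Definition pcons n x (p : {ffun 'I_n.+1 -> V}) : {ffun 'I_n.+2 -> V} :=
  [ffun k : 'I_n.+2 => if nat_of_ord k is m.+1 then p (inord m) else x].
Definition ptl n (p : {ffun 'I_n.+2 -> V}) : {ffun 'I_n.+1 -> V} :=
  [ffun k : 'I_n.+1 => p (inord k.+1)].

Arguments pcons {n}.
Arguments ptl {n}.

Lemma pcons_inord n x (p : {ffun 'I_n.+1 -> V}) m : (m <= n.+1)%N ->
  pcons x p (inord m) = if m is m'.+1 then p (inord m') else x.
Proof. by move=> hm; rewrite ffunE inordK. Qed.

Lemma ptl_pcons n x (p : {ffun 'I_n.+1 -> V}) : ptl (pcons x p) = p.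
Proof. by apply/ffunP => k; rewrite ffunE pcons_inord ?inord_val. Qed.

Lemma pcons_ptl n x (p : {ffun 'I_n.+2 -> V}) : p ord0 = x -> pcons x (ptl p) = p.
Proof.
move=> h0; apply/ffunP => k; rewrite ffunE.
case: k => [[|m] hm] /=.
  by rewrite -h0; congr (p _); apply/val_inj.
by rewrite ffunE; congr (p _); apply/val_inj => /=; rewrite !inordK.
Qed.

Lemma path_prob_cons n x (p : {ffun 'I_n.+1 -> V}) :
  path_prob w (pcons x p) = P x (p ord0) * path_prob w p.
Proof.
have i0 : (inord 0 : 'I_n.+1) = ord0 by apply/val_inj; rewrite /= inordK.
rewrite /path_prob big_ord_recl !pcons_inord //= i0; congr (_ * _).
apply: eq_bigr => i _; rewrite /bump /= add1n.
have h1 := ltn_ord i.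
by rewrite !pcons_inord // ltnS // ltnW.
Qed.

Lemma path_sig_cons n x (p : {ffun 'I_n.+1 -> V}) :
  path_sig sigma (pcons x p) = sigma x (p ord0) *m path_sig sigma p.
Proof.
have i0 : (inord 0 : 'I_n.+1) = ord0 by apply/val_inj; rewrite /= inordK.
rewrite /path_sig big_ord_recl !pcons_inord //= i0; congr (_ *m _).
apply: eq_bigr => i _; rewrite /bump /= add1n.
have h1 := ltn_ord i.
by rewrite !pcons_inord // ltnS // ltnW.
Qed.

Lemma first_hit_cons n x (p : {ffun 'I_n.+1 -> V}) : x != j ->
  first_hit0 x j (pcons x p) = first_hit0 (p ord0) j p.
Proof.
move=> xj; rewrite /first_hit0 ffunE /= !eqxx /=.
have -> : pcons x p ord_max = p ord_max.
  by rewrite ffunE /=; congr (p _); apply/val_inj; rewrite /= inordK.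
congr (_ && _); apply/forallP/forallP => H k.
  have := H (inord k.+1); rewrite ffunE inordK ?ltnS ?ltn_ord //= ?inord_val.
  by [].
  exact: (ltn_ord k).
rewrite ffunE; case: k => [[|m] hm] /=; first by rewrite xj.
by have := H (inord m); rewrite inordK.
Qed.


Lemma OmS n x : Omega0_term w sigma x j n.+1 = Tm (fun y => Omega0_term w sigma y j n) x.
Proof.
rewrite /Tm; case: (eqVneq x j) => [->|xj].
  rewrite /Omega0_term; apply: big1 => p /and3P [/eqP h0 _ /forallP h].
  by move: (h ord0); rewrite h0 eqxx.
rewrite /Omega0_term (reindex_onto (pcons x) ptl); last first.
  by move=> p /and3P [/eqP h0 _ _]; exact: pcons_ptl.
rewrite (eq_bigl (fun p : {ffun 'I_n.+1 -> V} => first_hit0 (p ord0) j p)); last first.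
  by move=> p; rewrite ptl_pcons eqxx andbT first_hit_cons.
rewrite (partition_big (fun p : {ffun 'I_n.+1 -> V} => p ord0) xpredT) //=.
apply: eq_bigr => y _.
rewrite mulmx_sumr scaler_sumr; apply: eq_big => p.
  case: (eqVneq (p ord0) y) => [<-|ne]; first by rewrite andbT.
  rewrite andbF; apply/esym/negbTE; apply/negP; rewrite /first_hit0 => /and3P [/eqP h _ _].
  by rewrite h eqxx in ne.
move=> /andP [_ /eqP h0]; rewrite path_prob_cons path_sig_cons h0.
by rewrite ?scalemxAr ?(scalemxAr (path_prob w p)) scalerA.
Qed.

Lemma Tm_sum k (g : 'I_k -> V -> 'M[R]_d) x :
  \sum_(i < k) Tm (g i) x = Tm (fun y => \sum_(i < k) g i y) x.
Proof.
rewrite /Tm; case: eqP => _; first by rewrite big1.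
rewrite exchange_big; apply: eq_bigr => y _; by rewrite mulmx_sumr scaler_sumr.
Qed.

Lemma OmSum N x : \sum_(n < N.+1) Omega0_term w sigma x j n = Sp N x.
Proof.
elim: N x => [|N IH] x; first by rewrite big_ord1 Om0.
rewrite big_ord_recl Om0.
under eq_bigr => i _ do rewrite lift0 OmS.
rewrite /=; congr (_ + _).
rewrite Tm_sum; congr (Tm _ x); apply/funext => y; exact: IH.
Qed.


Lemma conv_Sp x a c : (fun N => Sp N x a c) @ \oo --> limn (fun N => Sp N x a c).
Proof.
apply: (@cauchy_bound R _ (fun N => d%:R * q N x)).
  by move=> N M NM; exact: Sp_entry.
rewrite -(mulr0 d%:R); apply: cvgMl_tmp; exact: q_cvg0.
Qed.

Lemma Om_lim x a c : Omega0 w sigma x j a c = limn (fun N => Sp N x a c).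
Proof.
rewrite mxE.
have E : forall N, \sum_(n < N.+1) Omega0_term w sigma x j n a c = Sp N x a c.
  by move=> N; rewrite -OmSum summxE.
have h : (fun N => \sum_(n < N) Omega0_term w sigma x j n a c) @ \oo --> limn (fun N => Sp N x a c).
  rewrite -cvg_shiftS.
  have -> : [sequence (\sum_(n < N.+1) Omega0_term w sigma x j n a c)]_N = (fun N => Sp N x a c).
    by apply/funext => N /=; rewrite E.
  exact: conv_Sp.
exact: (cvg_lim (@Rhausdorff R) h).
Qed.

Lemma main_sec x a b : f x a b = \sum_c Omega0 w sigma x j a c * f j c b.
Proof.
have E N : f x a b = \sum_c Sp N x a c * f j c b + B N x a b.
  by rewrite {1}(key N x) !mxE.
have h1 : (fun N => \sum_c Sp N x a c * f j c b) @ \oo --> \sum_c Omega0 w sigma x j a c * f j c b.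
  apply: cvg_big => //; first exact: add_continuous.
  by move=> c _; rewrite Om_lim; apply: cvgMr_tmp; exact: conv_Sp.
have h2 : (fun N => B N x a b) @ \oo --> 0.
  apply: (@cvg0_sq R _ (fun N => Cf * q N x)).
    by move=> N; exact: (le_trans (F_entry (B N x) a b) (B_bound N x)).
  rewrite -(mulr0 Cf); apply: cvgMl_tmp; exact: q_cvg0.
have e : ((fun N => \sum_c Sp N x a c * f j c b) + (fun N => B N x a b)) = (fun _ => f x a b).
  by apply/funext => N; rewrite [RHS](E N).
have h : (fun _ => f x a b) @ \oo --> \sum_c Omega0 w sigma x j a c * f j c b + 0.
  by rewrite -e; apply: cvgD.
rewrite addr0 in h.
have := cvg_lim (@Rhausdorff R) h; rewrite lim_cst.
by apply; exact: eventually_filter.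
all: exact: Rhausdorff.
Qed.

End Main.

Theorem proposition4p7 (R : realType) (V : finType) (d : nat)
    (w : V -> V -> R) (sigma : V -> V -> 'M[R]_d) (f : V -> 'M[R]_d) :
  connection_graph w sigma ->
  (forall x : V, conn_laplacian w sigma f x = 0) ->
  forall i j : V, f i = Omega0 w sigma i j *m f j.
Proof.
move=> [wsym wge0 _ conn hs] lapf i j.
have orth : forall x y, adj w x y -> sigma x y *m (sigma x y)^T = 1%:M.
  by move=> x y /hs [].
apply/matrixP => a b; rewrite [RHS]mxE.
by apply: main_sec.
Qed.
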